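(* Let $f:[0,1]\to\mathbb R$, $f(x)=x\log^2 x$ (with $f(0)=0$), and $\varphi(x)=\sqrt{x(1-x)}$. Then the second-order Ditzian–Totik modulus of smoothness satisfies $\omega^2_\varphi(f,t)=\mathcal O\big(t^2\log(1/t)\big)$ as $t\to0^+$.
   Context: For a continuous $f:[0,1]\to\mathbb R$ and $t>0$, $\omega^2_\varphi(f,t)=\sup\big\{|f(u)+f(v)-2f(\tfrac{u+v}{2})| : (u,v)\in[0,1]^2,\ |u-v|\le 2t\,\varphi(\tfrac{u+v}{2})\big\}$. *)

(* Defs.v *)
From Stdlib Require Import Reals Lra.
From Coquelicot Require Import Coquelicot.
Open Scope R_scope.

Definition fxlog2 (x : R) : R := if Req_EM_T x 0 then 0 else x * (ln x) ^ 2.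

Definition phiDT (x : R) : R := sqrt (x * (1 - x)).

Definition DT_values (f phi : R -> R) (t : R) (y : R) : Prop :=
  exists u v : R, 0 <= u <= 1 /\ 0 <= v <= 1 /\
    Rabs (u - v) <= 2 * t * phi ((u + v) / 2) /\
    y = Rabs (f u + f v - 2 * f ((u + v) / 2)).

Definition omega2_phi (f phi : R -> R) (t : R) : Rbar :=
  Lub_Rbar (DT_values f phi t).

(* Main.v *)
Require Import Defs.
From Stdlib Require Import Reals Lra Psatz.
From Coquelicot Require Import Coquelicot.
Open Scope R_scope.

Lemma ln_le_m1 x : 0 < x -> ln x <= x - 1.
Proof. intro H. pose proof (exp_ineq1_le (ln x)). rewrite exp_ln in H0; lra. Qed.

Lemma ln_ge_1m x : 0 < x -> 1 - / x <= ln x.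
Proof.
  intro H. pose proof (ln_le_m1 (/ x) (Rinv_0_lt_compat _ H)).
  rewrite ln_Rinv in H0; lra.
Qed.

Lemma f_eq x : fxlog2 x = x * ln x ^ 2.
Proof.
  unfold fxlog2. destruct (Req_EM_T x 0); [subst; ring | reflexivity].
Qed.

Lemma T1 x m : 0 <= x -> 0 < m -> x - m <= x * ln (x / m) <= x * (x - m) / m.
Proof.
  intros Hx Hm. destruct (Req_dec x 0) as [->|Hx0].
  { unfold Rdiv. rewrite !Rmult_0_l. lra. }
  assert (Hxp : 0 < x) by lra.
  assert (Hy : 0 < x / m) by (apply Rdiv_lt_0_compat; lra).
  pose proof (ln_le_m1 _ Hy). pose proof (ln_ge_1m _ Hy).
  split.
  - replace (x - m) with (x * (1 - / (x / m))) by (field; lra).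
    apply Rmult_le_compat_l; lra.
  - replace (x * (x - m) / m) with (x * (x / m - 1)) by (field; lra).
    apply Rmult_le_compat_l; lra.
Qed.

Lemma T2 x m : 0 <= x <= 2 * m -> 0 < m -> x * ln (x / m) ^ 2 <= 4 * (x - m) ^ 2 / m.
Proof.
  intros Hx Hm. destruct (Req_dec x 0) as [->|Hx0].
  { replace (4 * (0 - m) ^ 2 / m) with (4 * m) by (field; lra). lra. }
  assert (Hxp : 0 < x) by lra.
  set (y := x / m).
  assert (Hy : 0 < y) by (apply Rdiv_lt_0_compat; lra).
  assert (Hy2 : y <= 2) by (unfold y; apply Rle_div_l; lra).
  assert (Hxe : x = m * y) by (unfold y; field; lra).
  assert (Hr : 4 * (x - m) ^ 2 / m = m * (4 * (1 - y) ^ 2)) by (rewrite Hxe; field; lra).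
  rewrite Hr, Hxe, Rmult_assoc. apply Rmult_le_compat_l; [lra|].
  destruct (Rle_dec 1 y) as [H1|H1].
  - pose proof (ln_le_m1 _ Hy).
    assert (0 <= ln y) by (rewrite <- ln_1; apply ln_le; lra).
    assert (ln y ^ 2 <= (y - 1) ^ 2) by nra.
    nra.
  - set (s := sqrt y).
    assert (Hs : 0 < s) by (apply sqrt_lt_R0; lra).
    assert (Hss : s * s = y) by (apply sqrt_sqrt; lra).
    assert (Hs1 : s < 1) by nra.
    assert (Hys : y <= s) by nra.
    assert (Hl : ln y = 2 * ln s) by (rewrite <- Hss, ln_mult; lra).
    pose proof (ln_ge_1m _ Hs).
    pose proof (ln_le_m1 _ Hs).
    assert (Hls : s * ln s >= s - 1).
    { replace (s - 1) with (s * (1 - / s)) by (field; lra). nra. }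
    assert (y * ln y ^ 2 = 4 * (s * ln s) ^ 2) by (rewrite Hl, <- Hss; ring).
    rewrite H2.
    assert (s * ln s <= 0) by nra.
    nra.
Qed.

Lemma split_id x m : 0 <= x -> 0 < m ->
  x * ln x ^ 2 = x * ln m ^ 2 + 2 * ln m * (x * ln (x / m)) + x * ln (x / m) ^ 2.
Proof.
  intros Hx Hm. destruct (Req_dec x 0) as [->|Hx0]; [ring|].
  rewrite ln_div by lra. ring.
Qed.

Lemma core t u v : 0 < t < exp (-1) -> 0 <= u <= 1 -> 0 <= v <= 1 ->
  Rabs (u - v) <= 2 * t * phiDT ((u + v) / 2) ->
  Rabs (fxlog2 u + fxlog2 v - 2 * fxlog2 ((u + v) / 2)) <= 20 * (t ^ 2 * ln (1 / t)).
Proof.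
  intros Ht Hu Hv Huv. rewrite !f_eq. set (m := (u + v) / 2) in *.
  assert (Hmd : u + v = 2 * m) by (subst m; lra). clearbody m.
  assert (Hlt : 1 < ln (1 / t)).
  { unfold Rdiv. rewrite Rmult_1_l, ln_Rinv by lra.
    assert (ln t < -1) by (rewrite <- (ln_exp (-1)); apply ln_increasing; lra). lra. }
  destruct (Req_dec m 0) as [Hm0|Hm0].
  { assert (u = 0) by lra. assert (v = 0) by lra.
    rewrite Hm0. subst. replace (0 * ln 0 ^ 2 + 0 * ln 0 ^ 2 - 2 * (0 * ln 0 ^ 2)) with 0 by ring.
    rewrite Rabs_R0. nra. }
  assert (Hm : 0 < m) by lra.
  assert (Hm1 : m <= 1) by lra.
  rewrite (split_id u m), (split_id v m), (split_id m m) by lra.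
  unfold Rdiv at 5. rewrite Rinv_r, ln_1 by lra.
  set (P := u * ln (u / m) + v * ln (v / m)).
  set (Q := u * ln (u / m) ^ 2 + v * ln (v / m) ^ 2).
  set (S := (u - v) ^ 2 / (2 * m)).
  assert (HS : ((u - m) ^ 2 + (v - m) ^ 2) / m = S) by (unfold S; replace v with (2 * m - u) by lra; field; lra).
  pose proof (T1 u m ltac:(lra) Hm). pose proof (T1 v m ltac:(lra) Hm).
  assert (u * (u - m) / m + v * (v - m) / m = S) by (rewrite <- HS; replace v with (2 * m - u) by lra; field; lra).
  assert (HP : 0 <= P <= S) by (unfold P; lra).
  pose proof (T2 u m ltac:(lra) Hm). pose proof (T2 v m ltac:(lra) Hm).
  assert (4 * (u - m) ^ 2 / m + 4 * (v - m) ^ 2 / m = 4 * S) by (rewrite <- HS; replace v with (2 * m - u) by lra; field; lra).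
  assert (HQ0 : 0 <= Q).
  { unfold Q. assert (0 <= u * ln (u / m) ^ 2) by (apply Rmult_le_pos; [lra| apply pow2_ge_0]).
    assert (0 <= v * ln (v / m) ^ 2) by (apply Rmult_le_pos; [lra| apply pow2_ge_0]). lra. }
  assert (HQ : Q <= 4 * S) by (unfold Q; lra).
  assert (Hlm : ln m <= 0) by (rewrite <- ln_1; apply ln_le; lra).
  assert (Hsq : (u - v) ^ 2 <= 4 * t ^ 2 * (m * (1 - m))).
  { unfold phiDT in Huv.
    assert (0 <= m * (1 - m)) by nra.
    pose proof (sqrt_pos (m * (1 - m))).
    pose proof (sqrt_sqrt _ H5).
    assert (Rabs (u - v) ^ 2 <= (2 * t * sqrt (m * (1 - m))) ^ 2).
    { pose proof (Rabs_pos (u - v)). nra. }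
    rewrite pow2_abs in H8.
    replace ((2 * t * sqrt (m * (1 - m))) ^ 2) with (4 * t ^ 2 * (sqrt (m * (1 - m)) * sqrt (m * (1 - m)))) in H8 by ring.
    rewrite H7 in H8.
    nra. }
  assert (HS0 : 0 <= S) by (unfold S; apply Rdiv_le_0_compat; [apply pow2_ge_0|lra]).
  assert (HSt : S <= 2 * t ^ 2).
  { unfold S. apply Rle_div_l; [lra|]. nra. }
  assert (HSm : S <= 2 * m).
  { unfold S. apply Rle_div_l; [lra|]. nra. }
  assert (Hlnm : - ln m <= 2 * ln (1 / t) + t ^ 2 / m).
  { assert (Ht2 : 0 < t ^ 2) by nra.
    pose proof (ln_le_m1 (t ^ 2 / m) ltac:(apply Rdiv_lt_0_compat; lra)).
    rewrite ln_div in H5 by lra.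
    replace (t ^ 2) with (t * t) in H5 at 1 by ring.
    rewrite ln_mult in H5 by lra.
    unfold Rdiv at 1. rewrite Rmult_1_l, ln_Rinv by lra. lra. }
  assert (HSdm : t ^ 2 / m * S <= 2 * t ^ 2).
  { replace (t ^ 2 / m * S) with (t ^ 2 * (S / m)) by (field; lra).
    assert (S / m <= 2) by (apply Rle_div_l; lra). nra. }
  set (Lt := ln (1 / t)) in *.
  match goal with |- Rabs ?E <= _ => replace E with (2 * ln m * P + Q) end.
  2:{ unfold P, Q. replace v with (2 * m - u) by lra. replace (m / m) with 1 by (field; lra). rewrite ln_1. ring. }
  assert (HlS : - ln m * S <= 2 * Lt * S + 2 * t ^ 2) by nra.
  apply Rabs_le. split; nra.
Qed.

Theorem mainTheorem8 :
  exists C delta : R, 0 < delta /\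
    forall t : R, 0 < t < delta ->
      Rbar_le (omega2_phi fxlog2 phiDT t) (Finite (C * (t ^ 2 * ln (1 / t)))).
Proof.
  exists 20, (exp (-1)). split; [apply exp_pos|].
  intros t Ht. unfold omega2_phi.
  apply (proj2 (Lub_Rbar_correct _)).
  intros y [u [v [Hu [Hv [Huv ->]]]]]. simpl.
  apply core; assumption.
Qed.
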